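(* Let $K$ be a field and $A,B\in M_n(K)$. Then $\dim\ker M(A,B)\ge n\sum (m-1)$, where $m$ runs over the geometric multiplicities of the distinct eigenvalues of $B$ lying in $K$.
   Context: For a commutative ring $R$ with $1$ and $A,B\in M_n(R)$, $M(A,B)\in M_{n^2}(R)$ is the block matrix consisting of $n\times n$ blocks whose $(i,j)$-th block is $A^{j-1}B^{i-1}$ ($i,j=1,\dots,n$); it acts on $K^{n^2}$ viewed as column vectors. *)

(* Defs.v *)
From HB Require Import structures.
From mathcomp Require Import all_boot all_order all_algebra.
Set Implicit Arguments. Unset Strict Implicit. Unset Printing Implicit Defensive.
Import GRing.Theory.
Local Open Scope ring_scope.

Definition Mblock (K : fieldType) (n : nat) (A B : 'M[K]_n)
  : 'M[K]_(\sum_(i < n) n, \sum_(j < n) n) :=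
  \mxblock_(i < n, j < n) (A ^+ j *m B ^+ i).

(* dimension of the kernel of M acting on column vectors, i.e. of
   {v | M *m v = 0} = left kernel of M^T *)
Definition dimker (K : fieldType) (p q : nat) (M : 'M[K]_(p, q)) : nat :=
  \rank (kermx M^T).

Definition geom_mult (K : fieldType) (n : nat) (B : 'M[K]_n) (a : K) : nat :=
  dimker (B - a%:M).

(* Main.v *)
Require Import Defs.
From mathcomp Require Import all_boot all_order all_algebra.
From mathcomp Require Import zify.
Set Implicit Arguments. Unset Strict Implicit. Unset Printing Implicit Defensive.
Import GRing.Theory.
Local Open Scope ring_scope.

Lemma trmxX (K : fieldType) (n : nat) (M : 'M[K]_n) i : (M ^+ i)^T = M^T ^+ i.
Proof.
elim: i => [|i IH]; first by rewrite !expr0 trmx1.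
by rewrite exprS exprSr -!mulmxE trmx_mul IH.
Qed.

Lemma Fe_indep (K : fieldType) (n : nat) (B : 'M[K]_n) a s : uniq (a :: s) ->
  (eigenspace B a :&: (\sum_(b <- s) eigenspace B b))%MS = 0.
Proof.
move=> us.
have inj : {in predT &, injective (fun i : 'I_(size (a::s)) => nth 0 (a::s) i)}.
  by move=> i j _ _ /eqP; rewrite nth_uniq // => /eqP /val_inj.
have /mxdirect_sumsP /(_ ord0 isT) := @mxdirect_sum_eigenspace _ _ _ B _ _ inj.
rewrite big_mkcond big_ord_recl /= adds0mx_id.
set S1 := (X in (_ :&: X)%MS); set S2 := (X in _ -> (_ :&: X)%MS = _).
suff -> : S1 = S2 by [].
rewrite /S1 /S2 (big_nth 0) big_mkord; apply: eq_bigr => i _ /=.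
rewrite /bump /=. done.
Qed.

Section Main.
Variables (K : fieldType) (n : nat) (A B : 'M[K]_n).

Definition Fe (a : K) : 'M[K]_n := eigenspace B^T a.
Definition Dg (S : 'M[K]_n) := \mxdiag_(j < n) S.
Definition RT := \mxcol_(j < n) (A ^+ j)^T.
Definition Wa (a : K) := (Dg (Fe a) :&: kermx RT)%MS.

Lemma Fe_pow a i : Fe a *m B^T ^+ i = a ^+ i *: Fe a.
Proof.
elim: i => [|i IH]; first by rewrite !expr0 mulmx1 scale1r.
rewrite exprSr -mulmxE mulmxA IH -scalemxAl.
have /eigenspaceP -> : (Fe a <= eigenspace B^T a)%MS by rewrite submx_refl.
by rewrite scalerA exprSr.
Qed.

Lemma DgFe_M a :
  Dg (Fe a) *m (Mblock A B)^T = Dg (Fe a) *m (RT *m \mxrow_(i < n) (a ^+ i)%:M).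
Proof.
rewrite /Mblock tr_mxblock /RT mul_mxcol_mxrow /Dg !mul_mxdiag_mxblock.
apply: eq_mxblock => j i.
by rewrite trmx_mul !trmxX !mulmxA Fe_pow mul_mx_scalar -scalemxAl.
Qed.

Lemma Wa_ker a : (Wa a <= kermx (Mblock A B)^T)%MS.
Proof.
have /sub_kermxP HR : (Wa a <= kermx RT)%MS by rewrite capmxSr.
have /submxP [X eX] : (Wa a <= Dg (Fe a))%MS by rewrite capmxSl.
apply/sub_kermxP; rewrite eX -mulmxA DgFe_M !mulmxA -eX HR mul0mx //.
Qed.

Lemma Dg_subP m (X : 'M[K]_(m, \sum_(j < n) n)) S :
  reflect (forall j, (submxrow X j <= S)%MS) (X <= Dg S)%MS.
Proof.
apply: (iffP idP).
  case/submxP=> Y -> j.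
  rewrite -[Y]submxrowK /Dg mul_mxrow_mxdiag mxrowK; exact: submxMl.
move=> H; rewrite -[X]submxrowK.
have -> : \mxrow_j submxrow X j = \mxrow_j (submxrow X j *m pinvmx S *m S).
  by apply: eq_mxrow => j; rewrite mulmxKpV.
by rewrite /Dg -mul_mxrow_mxdiag submxMl.
Qed.

Lemma Dg_mono S T : (S <= T)%MS -> (Dg S <= Dg T)%MS.
Proof.
move=> ST; apply/Dg_subP => j; apply: submx_trans ST.
by move: j; apply/Dg_subP.
Qed.

Lemma Dg_cap S T : (S :&: T)%MS = 0 -> (Dg S :&: Dg T)%MS = 0.
Proof.
move=> ST0.
set C := (Dg S :&: Dg T)%MS.
have H j : submxrow C j = 0.
  apply/eqP; rewrite -submx0 -ST0 sub_capmx.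
  have /Dg_subP -> : (C <= Dg S)%MS by rewrite capmxSl.
  by have /Dg_subP -> : (C <= Dg T)%MS by rewrite capmxSr.
by rewrite -[C]submxrowK (eq_mxrow H) mxrow0.
Qed.

Lemma Wa_rank a : (n * \rank (Fe a) - n <= \rank (Wa a))%N.
Proof.
have := mxrank_mul_ker (Dg (Fe a)) RT.
have := rank_leq_col (Dg (Fe a) *m RT).
rewrite /Wa {1 2}/Dg rank_mxdiag.
move: (\rank (_ *m _)) (\rank (_ :&: _)) => x y.
rewrite big_const_ord iter_addn_0 mulnC; lia.
Qed.

Lemma Ws_ind s : uniq s -> (forall b, b \in s -> 0 < \rank (Fe b))%N ->
  [/\ ((\sum_(b <- s) Wa b)%MS <= Dg (\sum_(b <- s) Fe b)%MS)%MS,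
      ((\sum_(b <- s) Wa b)%MS <= kermx (Mblock A B)^T)%MS &
      (n * \sum_(b <- s) (\rank (Fe b) - 1) <= \rank (\sum_(b <- s) Wa b)%MS)%N].
Proof.
elim: s => [|a s IH] /=.
  by move=> _ _; rewrite !big_nil mxrank0 muln0 !sub0mx.
case/andP=> nas us pos.
have [IH1 IH2 IH3] := IH us (fun b bs => pos b (mem_behead (s:=a::s) bs)).
have pa := pos a (mem_head a s).
rewrite !big_cons; split.
- rewrite addsmx_sub; apply/andP; split.
    apply: submx_trans (capmxSl _ _) _; apply: Dg_mono; exact: addsmxSl.
  apply: submx_trans IH1 _; apply: Dg_mono; exact: addsmxSr.
- by rewrite addsmx_sub Wa_ker IH2.
have cap0 : \rank (Wa a :&: (\sum_(b <- s) Wa b)%MS)%MS = 0%N.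
  have Hle : (\rank (Wa a :&: (\sum_(b <- s) Wa b)%MS)%MS <=
     \rank (Dg (Fe a) :&: Dg (\sum_(b <- s) Fe b)%MS)%MS)%N.
    by apply: mxrankS; apply: capmxS => //; apply: capmxSl.
  rewrite Dg_cap ?mxrank0 ?leqn0 in Hle; first exact/eqP.
  by apply: (@Fe_indep _ _ B^T); rewrite /= nas us.
have := mxrank_sum_cap (Wa a) (\sum_(b <- s) Wa b)%MS.
rewrite cap0 addn0 => ->.
have := Wa_rank a.
move: IH3; move: (\rank (Fe a)) pa => r pa.
move: (\sum_(b <- s) _)%N (\rank (Wa a)) (\rank (\sum_(b <- s) Wa b)%MS) => x y z.
rewrite mulnDr mulnBr muln1; lia.
Qed.
End Main.

Theorem mainTheorem2 (K : fieldType) (n : nat) (A B : 'M[K]_n) (s : seq K) :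
  uniq s -> (forall a : K, (a \in s) = eigenvalue B a) ->
  (n * \sum_(a <- s) (geom_mult B a - 1) <= dimker (Mblock A B))%N.
Proof.
move=> us Hs.
have gm a : geom_mult B a = \rank (Fe B a).
  by rewrite /geom_mult /dimker /Fe /eigenspace linearB /= tr_scalar_mx.
have pos : forall b, b \in s -> (0 < \rank (Fe B b))%N.
  move=> b; rewrite Hs /eigenvalue /Fe /eigenspace -!mxrank_eq0 !mxrank_ker.
  have -> : (B^T - b%:M) = (B - b%:M)^T by rewrite linearB /= tr_scalar_mx.
  by rewrite mxrank_tr lt0n.
have [_ H2 H3] := Ws_ind A us pos.
rewrite (eq_bigr (fun a => \rank (Fe B a) - 1)%N); last by move=> a _; rewrite gm.
apply: leq_trans H3 _; exact: mxrankS.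
Qed.
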